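(* Let $n\ge 2$ and let $\mu$ be a weight of the irreducible highest weight module $V(\Lambda_n)$ of the simple Lie algebra of type $C_n$. Suppose that every element $v\in B(\Lambda_n)$ with $\mathrm{wt}(v)=\mu$ has exactly $m<n$ single entries. Then $n-m=2k$ is even and $$\dim V(\Lambda_n)_\mu=\frac{1}{k+1}\binom{2k}{k}.$$
   Context: Let $\epsilon_1,\dots,\epsilon_n$ be the standard orthonormal basis of the dual of the Cartan subalgebra of $C_n$, with simple roots $\alpha_i=\epsilon_i-\epsilon_{i+1}$ ($1\le i\le n-1$), $\alpha_n=2\epsilon_n$, and fundamental weights $\Lambda_1,\dots,\Lambda_n$. Let $S=\{1,\dots,n,\bar n,\dots,\bar 1\}$ with total order $1\prec 2\prec\cdots\prec n\prec\bar n\prec\cdots\prec\bar 1$. The crystal $B(\Lambda_n)$ (Kashiwara–Nakashima) is the set of $n$-tuples $(i_1,\dots,i_n)$ of elements of $S$ with $i_1\prec i_2\prec\cdots\prec i_n$ such that whenever $i_k=p$ and $i_l=\bar p$ one has $k+(n-l+1)\le p$. Set $\mathrm{wt}(i)=\epsilon_i$, $\mathrm{wt}(\bar i)=-\epsilon_i$ and $\mathrm{wt}(i_1,\dots,i_n)=\sum_j\mathrm{wt}(i_j)$; then $\dim V(\Lambda_n)_\mu$ equals the number of elements of $B(\Lambda_n)$ of weight $\mu$. For $v=(i_1,\dots,i_n)\in B(\Lambda_n)$, an entry $i_k=p$ (resp. $i_k=\bar p$) is called a pair if $\bar p$ (resp. $p$) also occurs among the entries of $v$, and a single otherwise. *)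

(* Defs.v *)
From mathcomp Require Import all_boot all_order all_algebra.
Set Implicit Arguments. Unset Strict Implicit. Unset Printing Implicit Defensive.

(* Encoding of the alphabet S = {1 < ... < n < bar n < ... < bar 1} of type C_n
   by positions t : 'I_(2n):  t < n  encodes the unbarred letter t+1,
   n <= t < 2n encodes the barred letter  bar (2n - t).
   The order of S is the order of positions.  The letter "bar" of the
   position t is the position 2n-1-t. *)

Definition letter_label (n : nat) (t : 'I_(n.*2)) : nat :=
  if (t < n)%N then t.+1 else (n.*2 - t)%N.

Definition unbarred (n : nat) (t : 'I_(n.*2)) : bool := (t < n)%N.

Definition conj_pos (n : nat) (t : nat) : nat := (n.*2.-1 - t)%N.

(* The Kashiwara--Nakashima crystal B(Lambda_n): n-tuples strictly increasing
   (i_1 < ... < i_n) such that whenever i_k = p and i_l = bar p one has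
   k + (n - l + 1) <= p  (k, l are 1-based; here k.+1, l.+1). *)
Definition B_Lambda (n : nat) : {set n.-tuple 'I_(n.*2)} :=
  [set v : n.-tuple 'I_(n.*2) |
     sorted ltn [seq val x | x <- v] &&
     [forall k : 'I_n, forall l : 'I_n,
        (unbarred (tnth v k) &&
           (val (tnth v l) == conj_pos n (tnth v k))) ==>
        (k.+1 + (n - l.+1).+1 <= letter_label (tnth v k))%N]].

Definition wt (n : nat) (v : n.-tuple 'I_(n.*2)) : {ffun 'I_n -> int} :=
  [ffun i : 'I_n =>
     (Posz (count (fun t : 'I_(n.*2) => val t == val i) v) -
      Posz (count (fun t : 'I_(n.*2) => val t == conj_pos n i) v))%R].

Definition singles (n : nat) (v : n.-tuple 'I_(n.*2)) : nat :=
  count (fun t : 'I_(n.*2) => conj_pos n t \notin [seq val x | x <- v]) v.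

(* dim V(Lambda_n)_mu, computed as the number of crystal elements of weight mu *)
Definition wt_mult (n : nat) (mu : {ffun 'I_n -> int}) : nat :=
  #|[set v in B_Lambda n | wt v == mu]|.

(* Main.v *)
Require Import Defs.
From mathcomp Require Import all_boot all_order all_algebra.
From mathcomp Require Import zify.
Set Implicit Arguments. Unset Strict Implicit. Unset Printing Implicit Defensive.

Fixpoint E (m d : nat) : nat :=
  match m with
  | 0 => (d == 0 : nat)
  | m'.+1 => E m' d.+1 + (if d is d'.+1 then E m' d' else 0)
  end.

Lemma E_lt m d : m < d -> E m d = 0.
Proof.
elim: m d => [|m IH] [|d] //= H.
rewrite !IH //; lia.
Qed.

Definition Cm1 m q := if q is q'.+1 then 'C(m, q') else 0.

Lemma E_form m : forall d q, m = d + q.*2 -> E m d + Cm1 m q = 'C(m, q).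
Proof.
elim: m => [|m IH] d q.
  by case: d => //; case: q.
move=> Hm /=.
case: q Hm => [|q] Hm.
  rewrite addn0 in Hm; subst d => /=.
  rewrite E_lt // add0n.
  by move: (IH m 0 (esym (addn0 m))); rewrite /= addn0 => ->; rewrite !bin0.
have IH1 := IH d.+1 q ltac:(lia).
case: d Hm IH1 => [|d] Hm IH1.
  rewrite /= binS -IH1.
  have Hs : 'C(m, q) = 'C(m, q.+1).
    rewrite -(bin_sub (n:=m) (m:=q.+1)); last lia.
    have -> : m - q.+1 = q by lia. by [].
  case: q Hm IH1 Hs => [|q] Hm IH1 Hs /=; rewrite /= ?binS ?bin0 in IH1 Hs *; lia.
have IH2 := IH d q.+1 ltac:(lia).
rewrite /= binS.
case: q Hm IH1 IH2 => [|q] Hm IH1 IH2 /=; rewrite /= ?binS ?bin0 in IH1 IH2 *; lia.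
Qed.

Lemma catalan k : (E k.*2 0) * k.+1 = 'C(k.*2, k).
Proof.
have := E_form (d:=0) (q:=k) (erefl _).
case: k => [|k]; first by [].
rewrite /Cm1 add0n => H.
have H2 : 'C(k.+1.*2, k) * k.+2 = 'C(k.+1.*2, k.+1) * k.+1.
  have := mul_bin_left k.+1.*2 k.
  have -> : (k.+1.*2 - k) = k.+2 by lia.
  lia.
move: H H2; generalize (E k.+1.*2 0) ('C(k.+1.*2, k)) ('C(k.+1.*2, k.+1)) => e a b.
nia.
Qed.

Fixpoint okc (d : nat) (w : seq nat) : bool :=
  match w with
  | [::] => d == 0
  | y :: w' => match y with
               | 0 => okc d.+1 w'
               | 1 => okc d w'
               | 2 => (0 < d) && okc d.-1 w'
               | _ => false
               end
  end.

Fixpoint cands (p : seq bool) : seq (seq nat) :=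
  match p with
  | [::] => [:: [::]]
  | b :: p' => if b then map (cons 1) (cands p')
               else map (cons 0) (cands p') ++ map (cons 2) (cands p')
  end.

Definition compat (b : bool) (y : nat) : bool :=
  if b then y == 1 else (y == 0) || (y == 2).

Lemma mem_cands p w : (w \in cands p) = all2 compat p w.
Proof.
elim: p w => [|b p IH] [|y w] /=.
- by [].
- by rewrite inE.
- by case: b => //; rewrite ?mem_cat; apply/negP => /=; [case/mapP| case/orP; case/mapP].
- case: b.
    rewrite /compat; apply/mapP/andP.
      by case=> x Hx [-> ->]; rewrite -IH.
    by case=> /eqP -> Hw; exists w; rewrite ?IH.
  rewrite mem_cat /compat; apply/orP/andP.
    by case=> /mapP [x Hx [-> ->]]; rewrite -IH.
  by case=> /orP [] /eqP -> Hw; [left|right]; apply/mapP; exists w; rewrite ?IH.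
Qed.

Lemma uniq_cands p : uniq (cands p).
Proof.
elim: p => [|b p IH] //=.
have inj : forall y, injective (cons y : seq nat -> seq nat) by move=> y x z [].
case: b; first by rewrite map_inj_uniq.
rewrite cat_uniq !map_inj_uniq // IH /=.
rewrite andbT; apply/hasPn => x /mapP [z _ ->]; apply/mapP => [[u _]] //.
Qed.

Lemma count_cands p d : count (okc d) (cands p) = E (count negb p) d.
Proof.
elim: p d => [|b p IH] d /=.
  by case: d.
case: b => /=.
  by rewrite count_map -IH; apply: eq_count.
rewrite count_cat !count_map add0n /=.
rewrite -IH; congr (_ + _).
case: d => [|d] /=.
  by apply/eqP; rewrite -leqn0 leqNgt -has_count; apply/hasP => [[x _]].
by rewrite -IH.
Qed.

Lemma compat_sum p w : all2 compat p w ->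
  sumn w = count id p + (count (pred1 2) w).*2.
Proof.
elim: p w => [|b p IH] [|y w] //= /andP [H1 /IH ->].
case: b H1 => /=; rewrite /compat.
  by move/eqP ->; rewrite /=; lia.
by case/orP => /eqP ->; rewrite /=; lia.
Qed.

Lemma all2_size p w : all2 compat p w -> size w = size p.
Proof. by elim: p w => [|b p IH] [|y w] //= /andP [_ /IH ->]. Qed.

Lemma all2_nth p w j : all2 compat p w -> j < size p ->
  compat (nth false p j) (nth 0 w j).
Proof.
elim: p w j => [|b p IH] [|y w] [|j] //= /andP [H1 H2] Hj.
  by []. exact: IH H2 Hj.
Qed.

Lemma all2_nthP p w : size w = size p ->
  (forall j, j < size p -> compat (nth false p j) (nth 0 w j)) -> all2 compat p w.
Proof.
elim: p w => [|b p IH] [|y w] //= [Hs] H.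
rewrite (H 0) //=; apply: IH => // j Hj; exact: (H j.+1).
Qed.

Lemma okcP d w : reflect
  [/\ all (fun y => y <= 2) w,
      (forall x, x < size w -> nth 0 w x = 2 -> sumn (take x w) < d + x) &
      sumn w = d + size w] (okc d w).
Proof.
elim: w d => [|y w IH] d /=.
  by apply: (iffP eqP) => [->|[]] //; rewrite addn0.
case: y => [|[|[|y]]] /=.
- apply: (iffP (IH d.+1)) => [[H1 H2 H3]|[H1 H2 H3]]; split => //.
  + case=> [|x] //= Hx Hn; have := H2 x Hx Hn; lia.
  + lia.
  + move=> x Hx Hn; have := H2 x.+1 Hx Hn; rewrite /=; lia.
  + lia.
- apply: (iffP (IH d)) => [[H1 H2 H3]|[H1 H2 H3]]; split => //.
  + case=> [|x] //= Hx Hn; have := H2 x Hx Hn; lia.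
  + lia.
  + move=> x Hx Hn; have := H2 x.+1 Hx Hn; rewrite /=; lia.
  + lia.
- case: d => [|d] /=.
    by constructor => -[_ H _]; have := H 0 erefl erefl.
  apply: (iffP (IH d)) => [[H1 H2 H3]|[H1 H2 H3]]; split => //.
  + case=> [|x] //= Hx Hn; have := H2 x Hx Hn; lia.
  + lia.
  + move=> x Hx Hn; have := H2 x.+1 Hx Hn; rewrite /=; lia.
  + lia.
- by constructor => -[].
Qed.

Lemma conjK n t : t < n.*2 -> conj_pos n (conj_pos n t) = t.
Proof. rewrite /conj_pos; lia. Qed.

Lemma count_iota (p : pred nat) s N : uniq s -> (forall t, t \in s -> p t -> t < N) ->
  count p s = count (fun t => p t && (t \in s)) (iota 0 N).
Proof.
move=> Hu Hb.
rewrite -!size_filter; apply: perm_size; apply: uniq_perm.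
- exact: filter_uniq.
- exact/filter_uniq/iota_uniq.
move=> t; rewrite !mem_filter mem_iota /=.
apply/andP/andP => [[H1 H2]|[/andP [H1 H2] _]] //.
by rewrite H1 H2 add0n; split => //; exact: Hb.
Qed.

Lemma count_reidx n (q : pred nat) :
  count q (iota n n) = count (fun j => q (conj_pos n j)) (iota 0 n).
Proof.
have -> : iota n n = [seq conj_pos n j | j <- rev (iota 0 n)].
  apply: (@eq_from_nth _ 0).
    by rewrite size_map size_rev !size_iota.
  rewrite size_iota => i Hi.
  rewrite (nth_map 0); last by rewrite size_rev size_iota.
  rewrite nth_rev ?size_iota // !nth_iota //; last lia.
  rewrite /conj_pos; lia.
by rewrite count_map count_rev.
Qed.

Lemma count_restrict (q : pred nat) x N : x <= N ->
  count (fun j => (j < x) && q j) (iota 0 N) = count q (iota 0 x).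
Proof.
move=> H; rewrite -(subnKC H) iotaD count_cat add0n.
have -> : count (fun j => (j < x) && q j) (iota x (N - x)) = 0.
  rewrite (eq_in_count (a2 := pred0)) ?count_pred0 //.
  by move=> j; rewrite mem_iota => /andP [H1 _]; rewrite ltnNge H1.
rewrite addn0; apply: eq_in_count.
by move=> j; rewrite mem_iota => /andP [_ ->].
Qed.

Definition ca (s : seq nat) x := count (fun j => j \in s) (iota 0 x).
Definition cb n (s : seq nat) x := count (fun j => conj_pos n j \in s) (iota 0 x).
Definition cw n (s : seq nat) : seq nat :=
  [seq (j \in s) + (conj_pos n j \in s) | j <- iota 0 n].

Lemma sumn_map_add (P Q : pred nat) l :
  sumn [seq P j + Q j | j <- l] = count P l + count Q l.
Proof. elim: l => //= j l ->; lia. Qed.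

Lemma sumn_take_cw n s x : x <= n -> sumn (take x (cw n s)) = ca s x + cb n s x.
Proof.
move=> H; rewrite /cw -map_take take_iota sumn_map_add.
by have -> : minn x n = x by lia.
Qed.

Lemma size_cw n s : size (cw n s) = n.
Proof. by rewrite size_map size_iota. Qed.

Lemma nth_cw n s j : j < n -> nth 0 (cw n s) j = (j \in s) + (conj_pos n j \in s).
Proof. by move=> H; rewrite (nth_map 0) ?size_iota // nth_iota. Qed.

Lemma size_via n s : uniq s -> all (fun t => t < n.*2) s -> size s = ca s n + cb n s n.
Proof.
move=> Hu Ha.
rewrite -count_predT (count_iota (N := n.*2)) //; last by move=> t /(allP Ha).
rewrite -addnn iotaD count_cat count_reidx /=.
by rewrite add0n.
Qed.

Lemma index_ca s x : sorted ltn s -> x \in s -> index x s = ca s x.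
Proof.
move=> Hs Hx.
have Hu : uniq s by apply: sorted_uniq Hs; [exact: ltn_trans | exact: ltnn].
have -> : index x s = count (fun t => t < x) s.
  clear Hu; elim: s Hs Hx => [|y s IH] //= Hs Hx.
  have Hall := order_path_min ltn_trans Hs.
  case: (eqVneq y x) => [Exy|Hne].
    subst x; rewrite ltnn add0n; apply/esym.
    rewrite (eq_in_count (a2 := pred0)) ?count_pred0 //.
    by move=> t /(allP Hall) /= H; apply/negbTE; lia.
  have Hx' : x \in s by move: Hx; rewrite inE eq_sym (negbTE Hne).
  rewrite (allP Hall x Hx') IH //; exact: path_sorted Hs.
rewrite (count_iota (N := x)) //.
by apply: eq_in_count => t; rewrite mem_iota /= => ->.
Qed.

Lemma count_split3 (c : nat) s :
  count (fun t => t < c) s + count (fun t => c < t) s + count (pred1 c) s = size s.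
Proof.
elim: s => //= y s <-.
case: (ltngtP y c) => H /=; try lia.
Qed.

Lemma index_cb n s x : sorted ltn s -> all (fun t => t < n.*2) s -> size s = n ->
  x < n -> conj_pos n x \in s -> n - (index (conj_pos n x) s).+1 = cb n s x.
Proof.
move=> Hs Ha Hsz Hx Hc.
have Hu : uniq s by apply: sorted_uniq Hs; [exact: ltn_trans | exact: ltnn].
set c := conj_pos n x.
have -> : index c s = count (fun t => t < c) s.
  rewrite index_ca // /ca (count_iota (N := c)) //.
  by apply: eq_in_count => t; rewrite mem_iota /= => ->.
have H3 := count_split3 c s.
have H1 : count (pred1 c) s = 1 by rewrite count_uniq_mem // Hc.
have -> : n - (count (fun t => t < c) s).+1 = count (fun t => c < t) s by lia.
rewrite (count_iota (N := n.*2)) //; last by move=> t /(allP Ha).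
rewrite -addnn iotaD count_cat count_reidx /=.
rewrite (eq_in_count (a2 := pred0)) ?count_pred0 ?add0n; last first.
  by move=> t; rewrite mem_iota /= /c /conj_pos => H; apply/negbTE; lia.
rewrite /cb -(count_restrict _ (x := x) (N := n)); last lia.
apply: eq_in_count => j; rewrite mem_iota /c /conj_pos /= => Hj.
congr (_ && _); apply/idP/idP; lia.
Qed.

Lemma singles_count n s : uniq s -> all (fun t => t < n.*2) s ->
  count (fun t => conj_pos n t \notin s) s =
  count (fun j => (j \in s) != (conj_pos n j \in s)) (iota 0 n).
Proof.
move=> Hu Ha.
rewrite (count_iota (N := n.*2)) //; last by move=> t /(allP Ha).
rewrite -addnn iotaD count_cat count_reidx /= -count_predUI.
rewrite (eq_in_count (a1 := predI _ _) (a2 := pred0)) ?count_pred0 ?addn0; last first.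
  move=> j; rewrite mem_iota /= => Hj; rewrite conjK; last lia.
  by case: (j \in s); case: (conj_pos n j \in s).
apply: eq_in_count => j; rewrite mem_iota /= => Hj; rewrite conjK; last lia.
by case: (j \in s); case: (conj_pos n j \in s).
Qed.

Lemma tnth_val n N (v : n.-tuple 'I_N) (k : 'I_n) : val (tnth v k) = nth 0 (map val v) k.
Proof. by rewrite (tnth_nth (tnth v k)) (nth_map (tnth v k)) // size_tuple. Qed.

Lemma Bchar n (v : n.-tuple 'I_(n.*2)) : sorted ltn (map val v) ->
  reflect (forall x, x < n -> x \in map val v -> conj_pos n x \in map val v ->
            ca (map val v) x + cb n (map val v) x < x) (v \in B_Lambda n).
Proof.
set s := map val v => Hs.
have Hsz : size s = n by rewrite size_map size_tuple.
have Hu : uniq s by apply: sorted_uniq Hs; [exact: ltn_trans | exact: ltnn].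
have Ha : all (fun t => t < n.*2) s by apply/allP => t /mapP [y _ ->]; exact: ltn_ord.
rewrite inE Hs /=; apply: (iffP forallP).
  move=> H x Hx Hxs Hcs.
  have Hk : index x s < n by rewrite -Hsz index_mem.
  have Hl : index (conj_pos n x) s < n by move: (index_mem (conj_pos n x) s); rewrite Hcs Hsz.
  have := forallP (H (Ordinal Hk)) (Ordinal Hl).
  rewrite /unbarred /letter_label !tnth_val /= !nth_index // Hx eqxx /=.
  rewrite (index_ca Hs Hxs) -(index_cb Hs Ha Hsz Hx Hcs) => H'.
  have := index_mem (conj_pos n x) s; rewrite Hcs Hsz => Hl'.
  lia.
move=> H k; apply/forallP => l; apply/implyP.
rewrite /unbarred /letter_label !tnth_val => /andP [Hx /eqP Hl]; rewrite Hx.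
set x := nth 0 s k in Hx Hl *.
have Hxs : x \in s by rewrite mem_nth // Hsz.
have Hcs : conj_pos n x \in s by rewrite -Hl mem_nth // Hsz.
have := H x Hx Hxs Hcs.
have Ek : index x s = k by rewrite index_uniq // Hsz.
have El : index (conj_pos n x) s = l by rewrite -Hl index_uniq // Hsz.
rewrite -(index_ca Hs Hxs) -(index_cb Hs Ha Hsz Hx Hcs) Ek El.
have := ltn_ord l; lia.
Qed.

Lemma wtE n (v : n.-tuple 'I_(n.*2)) (i : 'I_n) : uniq (map val v) ->
  wt v i = (Posz (val i \in map val v) - Posz (conj_pos n i \in map val v))%R.
Proof.
move=> Hu; rewrite ffunE.
have E1 : forall y, count (fun t : 'I_(n.*2) => val t == y) v = count_mem y (map val v).
  by move=> y; rewrite count_map.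
by rewrite !E1 !count_uniq_mem.
Qed.

Definition pat n (s0 : seq nat) : seq bool :=
  [seq (j \in s0) != (conj_pos n j \in s0) | j <- iota 0 n].

Lemma nth_pat n s0 j : j < n -> nth false (pat n s0) j = ((j \in s0) != (conj_pos n j \in s0)).
Proof. by move=> H; rewrite (nth_map 0) ?size_iota // nth_iota. Qed.

Lemma size_pat n s0 : size (pat n s0) = n.
Proof. by rewrite size_map size_iota. Qed.

Lemma bool_eq (a b a' b' a0 b0 : bool) : a + b = a' + b' ->
  (Posz a - Posz b = Posz a0 - Posz b0)%R -> (Posz a' - Posz b' = Posz a0 - Posz b0)%R ->
  a = a' /\ b = b'.
Proof. by case: a; case: b; case: a'; case: b'; case: a0; case: b0. Qed.

Lemma key n (v0 : n.-tuple 'I_(n.*2)) : v0 \in B_Lambda n ->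
  #|[set v in B_Lambda n | wt v == wt v0]| = count (okc 0) (cands (pat n (map val v0))).
Proof.
move=> Hv0.
set A := [set v in B_Lambda n | wt v == wt v0].
set s0 := map val v0.
have Hsorted : forall v, v \in B_Lambda n -> sorted ltn (map val v).
  by move=> v; rewrite inE => /andP [].
have Hall : forall v : n.-tuple 'I_(n.*2), all (fun t => t < n.*2) (map val v).
  by move=> v; apply/allP => t /mapP [y _ ->]; exact: ltn_ord.
have Hsz : forall v : n.-tuple 'I_(n.*2), size (map val v) = n.
  by move=> v; rewrite size_map size_tuple.
have Huniq : forall v, v \in B_Lambda n -> uniq (map val v).
  by move=> v /Hsorted Hs; apply: sorted_uniq Hs; [exact: ltn_trans | exact: ltnn].
have Aeq : forall v, v \in A -> forall j, j < n ->
    (Posz (j \in map val v) - Posz (conj_pos n j \in map val v) =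
     Posz (j \in s0) - Posz (conj_pos n j \in s0))%R.
  move=> v; rewrite inE => /andP [Hv /eqP Hw] j Hj.
  have := congr1 (fun f : {ffun _ -> int} => f (Ordinal Hj)) Hw.
  by rewrite !wtE //= ?Huniq.
set F := fun v : n.-tuple 'I_(n.*2) => cw n (map val v).
rewrite cardE -(size_map F) -size_filter.
apply: perm_size; apply: uniq_perm.
- rewrite map_inj_in_uniq ?enum_uniq //.
  move=> u v; rewrite !mem_enum => Hu Hv HF.
  have HuB : u \in B_Lambda n by move: Hu; rewrite inE => /andP [].
  have HvB : v \in B_Lambda n by move: Hv; rewrite inE => /andP [].
  have Hc : forall j, j < n -> (j \in map val u) = (j \in map val v) /\
       (conj_pos n j \in map val u) = (conj_pos n j \in map val v).
    move=> j Hj.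
    apply: (bool_eq (a0 := j \in s0) (b0 := conj_pos n j \in s0)); last first.
    + exact: Aeq.
    + exact: Aeq.
    by rewrite -!nth_cw // -/(F u) HF.
  apply: val_inj; apply: (inj_map val_inj).
  apply: (irr_sorted_eq ltn_trans ltnn); rewrite ?Hsorted //.
  move=> t.
  case: (ltnP t n) => Ht; first by case: (Hc t Ht).
  case: (ltnP t n.*2) => Ht2.
    have Hj : conj_pos n t < n by rewrite /conj_pos; lia.
    rewrite -(conjK Ht2); by case: (Hc _ Hj).
  by apply/idP/idP => /mapP [y _ Ey]; have : val y < n.*2 := ltn_ord y; lia.
- exact/filter_uniq/uniq_cands.
move=> w; apply/idP/idP.
  case/mapP => v; rewrite mem_enum => Hv ->.
  have HvB : v \in B_Lambda n by move: Hv; rewrite inE => /andP [].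
  rewrite mem_filter mem_cands; apply/andP; split.
    apply/okcP; split.
    + apply/allP => y /mapP [j _ ->].
      by case: (j \in _); case: (conj_pos n j \in _).
    + rewrite size_cw => x Hx; rewrite nth_cw // sumn_take_cw ?add0n; last lia.
      move=> H2; apply: (Bchar (Hsorted _ HvB)) => //.
        by move: H2; case: (x \in _); case: (conj_pos n x \in _).
      by move: H2; case: (x \in _); case: (conj_pos n x \in _).
      rewrite /F size_cw add0n -{1}(take_size (cw n _)) size_cw sumn_take_cw //.
      by rewrite -size_via ?Hsz ?Huniq.
  apply: all2_nthP; first by rewrite size_cw size_pat.
  rewrite size_pat => j Hj; rewrite nth_pat // nth_cw //.
  have := Aeq v Hv j Hj.
  rewrite /compat.
  by case: (j \in map val v); case: (conj_pos n j \in map val v);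
     case: (j \in s0); case: (conj_pos n j \in s0).
rewrite mem_filter => /andP [Hok]; rewrite mem_cands => Hc.
case/okcP: Hok => Hle Hcond Hsum.
have Hwsz : size w = n by rewrite (all2_size Hc) size_pat.
set p := pat n s0.
pose memb (t : nat) := let j := if t < n then t else conj_pos n t in
  if nth false p j then t \in s0 else nth 0 w j == 2.
set S := [set t : 'I_(n.*2) | memb t].
set s := map val (enum S).
have Hs_mem : forall t, (t \in s) = (t < n.*2) && memb t.
  move=> t; apply/mapP/andP.
    by case=> x; rewrite mem_enum inE => Hx ->; split => //; exact: ltn_ord.
  by case=> Ht Hm; exists (Ordinal Ht); rewrite ?mem_enum ?inE.
have Hs_sorted : sorted ltn s.
  rewrite /s /enum_mem -enumT sorted_map.
  apply: sorted_filter; first by move=> x y z; exact: ltn_trans.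
  by rewrite -sorted_map val_enum_ord iota_ltn_sorted.
have Hs_uniq : uniq s by apply: sorted_uniq Hs_sorted; [exact: ltn_trans | exact: ltnn].
have Hs_all : all (fun t => t < n.*2) s by apply/allP => t; rewrite Hs_mem => /andP [].
have Ha : forall j, j < n -> (j \in s) = (if nth false p j then j \in s0 else nth 0 w j == 2).
  by move=> j Hj; rewrite Hs_mem /memb Hj /=; have -> : j < n.*2 by lia.
have Hb : forall j, j < n -> (conj_pos n j \in s) =
    (if nth false p j then conj_pos n j \in s0 else nth 0 w j == 2).
  move=> j Hj; rewrite Hs_mem /memb.
  have -> : conj_pos n j < n.*2 by rewrite /conj_pos; lia.
  have -> : conj_pos n j < n = false by apply/negbTE; rewrite /conj_pos; lia.
  by rewrite conjK //; lia.
have Hcw : cw n s = w.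
  apply: (@eq_from_nth _ 0); first by rewrite size_cw Hwsz.
  rewrite size_cw => j Hj; rewrite nth_cw // Ha // Hb //.
  have := all2_nth Hc (j := j); rewrite size_pat => /(_ Hj).
  rewrite /p nth_pat // /compat.
  by case: (j \in s0); case: (conj_pos n j \in s0) => /=; case: (nth 0 w j) => [|[|[|]]].
have Hssz : size (enum S) == n.
  rewrite -(size_map val) -/s (size_via Hs_uniq Hs_all) -sumn_take_cw // take_oversize ?size_cw //.
  by rewrite Hcw Hsum add0n Hwsz.
apply/mapP; exists (Tuple Hssz); last by [].
rewrite mem_enum inE; apply/andP; split.
  apply/(Bchar _) => //= x Hx Hxs Hcs.
  have := Hcond x; rewrite Hwsz add0n -Hcw sumn_take_cw; last lia.
  by apply => //; rewrite nth_cw // Hxs Hcs.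
apply/eqP/ffunP => i.
rewrite !wtE //= ?Huniq // Ha // Hb // /p nth_pat //.
rewrite -/s0; by case: (nat_of_ord i \in s0); case: (conj_pos n (nat_of_ord i) \in s0); case: (nth 0 w i == 2).
Qed.

Import GRing.Theory Num.Theory.

Theorem mainTheorem1 (n : nat) (mu : {ffun 'I_n -> int}) (m : nat) :
  (2 <= n)%N ->
  (0 < wt_mult mu)%N ->
  (forall v, v \in B_Lambda n -> wt v = mu -> singles v = m) ->
  (m < n)%N ->
  exists k : nat, (n - m = k.*2)%N /\
    ((wt_mult mu)%:R = ((k.+1)%:R)^-1 * ('C(k.*2, k))%:R :> rat)%R.
Proof.
move=> Hn Hpos Hsing Hm.
have [v0] : exists v0, v0 \in [set v in B_Lambda n | wt v == mu].
  by apply/set0Pn; rewrite -card_gt0.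
rewrite inE => /andP [Hv0 /eqP Hw].
have Hm0 := Hsing v0 Hv0 Hw.
subst mu.
set s0 := map val v0.
have Hs0 : sorted ltn s0 by move: Hv0; rewrite inE => /andP [].
have Hu0 : uniq s0 by apply: sorted_uniq Hs0; [exact: ltn_trans | exact: ltnn].
have Ha0 : all (fun t => t < n.*2) s0 by apply/allP => t /mapP [y _ ->]; exact: ltn_ord.
have Hsz0 : size s0 = n by rewrite size_map size_tuple.
set p := pat n s0.
have Hc : all2 compat p (cw n s0).
  apply: all2_nthP; first by rewrite size_cw size_pat.
  rewrite size_pat => j Hj; rewrite nth_pat // nth_cw // /compat.
  by case: (j \in s0); case: (conj_pos n j \in s0).
have Hsum : sumn (cw n s0) = n.
  rewrite -{1}(take_oversize (n := n) (s := cw n s0)) ?size_cw // sumn_take_cw //.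
  by rewrite -size_via.
have Hsing0 : m = count id p.
  rewrite -Hm0 /singles -/s0.
  have -> : count (fun t : 'I_(n.*2) => conj_pos n t \notin s0) v0 =
            count (fun t => conj_pos n t \notin s0) s0 by rewrite count_map.
  by rewrite (singles_count Hu0 Ha0) /p /pat count_map.
have Hp := count_predC id p.
have Hneg : count negb p = count (predC id) p by apply: eq_count.
rewrite size_pat in Hp.
have Hcs := compat_sum Hc.
exists (count (pred1 2) (cw n s0)); split.
  lia.
rewrite /wt_mult (key Hv0) -/s0 count_cands.
have -> : count negb p = (count (pred1 2) (cw n s0)).*2.
  lia.
rewrite -catalan natrM (mulrC (E _ _)%:R%R) mulKf // pnatr_eq0 //.
Qed.
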